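(* Let $\mathcal M(n)$ denote the maximum number of edges of an edge-magic graph with $n$ vertices. Then $$\frac27\, n^2+O(n)\le \mathcal M(n)\le \left(0.489\ldots+o(1)\right) n^2 \qquad (n\to\infty),$$ where $0.489\ldots$ denotes the constant $\frac12-\frac{2}{(2+(1+2\sqrt2)\pi)^2}\approx 0.4898$.
   Context: For a positive integer $k$, $[k]=\{1,\dots,k\}$. Let $G$ be a finite simple graph with $n$ vertices and $m$ edges (with $V(G)\cap E(G)=\emptyset$). An edge-magic labelling of $G$ with magic sum $s$ is a bijection $l:V(G)\cup E(G)\to[m+n]$ such that $l(a)+l(b)+l(ab)=s$ for every edge $ab$ of $G$. The graph $G$ is edge-magic if it admits an edge-magic labelling for some $s$. *)

(* Defs.v *)
From mathcomp Require Import all_boot.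
Set Implicit Arguments. Unset Strict Implicit. Unset Printing Implicit Defensive.

Definition simple_graph (n : nat) (e : rel 'I_n) : Prop :=
  symmetric e /\ irreflexive e.

(* Edge set: each unordered edge {a,b} is represented once, as the pair (a,b)
   with a < b. *)
Definition edges (n : nat) (e : rel 'I_n) : {set 'I_n * 'I_n} :=
  [set p : 'I_n * 'I_n | (p.1 < p.2)%N && e p.1 p.2].

(* An edge-magic labelling with magic sum s: vertex labels lv, edge labels
   le (read on the representative pair (a,b), a < b), such that the combined
   map V(G) u E(G) -> [m+n] is a bijection (all labels in [1, m+n], injective,
   surjective) and l(a)+l(b)+l(ab) = s for every edge ab. *)
Definition edge_magic_labelling (n : nat) (e : rel 'I_n)
    (lv : 'I_n -> nat) (le : 'I_n -> 'I_n -> nat) (s : nat) : Prop :=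
  let N := (#|edges e| + n)%N in
  (forall v, 1 <= lv v <= N) /\
      (forall p, p \in edges e -> 1 <= le p.1 p.2 <= N) /\
      (forall v w, lv v = lv w -> v = w) /\
      (forall p q, p \in edges e -> q \in edges e ->
          le p.1 p.2 = le q.1 q.2 -> p = q) /\
      (forall v p, p \in edges e -> lv v <> le p.1 p.2) /\
      (forall k, 1 <= k <= N ->
          (exists v, lv v = k) \/ (exists2 p, p \in edges e & le p.1 p.2 = k)) /\
      (forall p, p \in edges e -> (lv p.1 + lv p.2 + le p.1 p.2)%N = s).

Definition edge_magic (n : nat) (e : rel 'I_n) : Prop :=
  exists lv le s, edge_magic_labelling e lv le s.

Definition is_max_edge_magic (n k : nat) : Prop :=
  (exists e : rel 'I_n, [/\ simple_graph e, edge_magic e & #|edges e| = k]) /\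
  (forall e : rel 'I_n, simple_graph e -> edge_magic e -> #|edges e| <= k).

(* Main.v *)
Require Import Defs.
From Stdlib Require Import Reals Lra Lia Psatz Machin.
From mathcomp Require Import all_boot ssralg ssrnum Rstruct zify.
Set Implicit Arguments. Unset Strict Implicit. Unset Printing Implicit Defensive.

Section Build.
Variables (n N s : nat) (f : 'I_n -> nat).
Hypothesis finj : injective f.
Hypothesis frange : forall i, 0 < f i <= N.
Hypothesis fcov : forall k, 0 < k <= N -> (forall i, f i != k) ->
  exists i j, i != j /\ f i + f j + k = s.

Definition goodsum (t : nat) : bool :=
  [&& t < s, s - t <= N & [forall v, f v != s - t]].

Definition emin (i j : 'I_n) : bool :=
  [forall i', forall j', ((i' != j') && (f i' + f j' == f i + f j)) ==> (minn i j <= minn i' j')].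

Definition eb (i j : 'I_n) : bool := [&& i != j, goodsum (f i + f j) & emin i j].

Lemma eb_sym : symmetric eb.
Proof.
move=> i j; rewrite /eb /emin eq_sym addnC minnC; done.
Qed.

Lemma eb_irr : irreflexive eb.
Proof. by move=> i; rewrite /eb eqxx. Qed.

Lemma eb_uniq i j i' j' : eb i j -> eb i' j' -> f i + f j = f i' + f j' ->
  (i = i' /\ j = j') \/ (i = j' /\ j = i').
Proof.
case/and3P=> nij _ /forallP m1; case/and3P=> nij' _ /forallP m2 hs.
have h1 := m1 i'; move/forallP: h1 => /(_ j'); rewrite nij' hs eqxx /= => h1.
have h2 := m2 i; move/forallP: h2 => /(_ j); rewrite nij -hs eqxx /= => h2.
have hm : minn i j = minn i' j' :> nat by apply/eqP; rewrite eqn_leq h1 h2.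
have key : forall a b a' b' : 'I_n, a = a' -> f a + f b = f a' + f b' -> b = b'.
  move=> a b a' b' -> h; apply: finj; lia.
case: (leqP i j) => hij; case: (leqP i' j') => hij'.
- have e1 : i = i' by apply: val_inj; move: hm; rewrite /minn; case: ltnP; case: ltnP => //= *; lia.
  left; split=> //; exact: key e1 hs.
- have e1 : i = j' by apply: val_inj; move: hm; rewrite /minn; case: ltnP; case: ltnP => //= *; lia.
  right; split=> //; apply: (key i j j' i') => //; lia.
- have e1 : j = i' by apply: val_inj; move: hm; rewrite /minn; case: ltnP; case: ltnP => //= *; lia.
  right; split=> //; apply: (key j i i' j') => //; lia.
- have e1 : j = j' by apply: val_inj; move: hm; rewrite /minn; case: ltnP; case: ltnP => //= *; lia.
  left; split=> //; apply: (key j i j' i') => //; lia.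
Qed.

End Build.

Section Build2.
Variables (n N s : nat) (f : 'I_n -> nat).
Hypothesis finj : injective f.
Hypothesis frange : forall i, 0 < f i <= N.
Hypothesis fcov : forall k, 0 < k <= N -> (forall i, f i != k) ->
  exists i j, i != j /\ f i + f j + k = s.

Lemma eb_exists k : 0 < k <= N -> (forall i, f i != k) ->
  exists p : 'I_n * 'I_n, [/\ p.1 < p.2, eb N s f p.1 p.2 & f p.1 + f p.2 + k = s].
Proof.
move=> hk hnot; have [i0 [j0 [hne hs]]] := fcov hk hnot.
pose P := fun p : 'I_n * 'I_n => (p.1 != p.2) && (f p.1 + f p.2 == f i0 + f j0).
have P0 : P (i0, j0) by rewrite /P /= hne eqxx.
case: (arg_minnP (fun p : 'I_n * 'I_n => minn p.1 p.2) P0) => [[p1 p2]] /andP[/= pne /eqP ps] pmin.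
have ebp : eb N s f p1 p2.
  rewrite /eb pne /=; apply/andP; split.
    rewrite /goodsum; apply/and3P; split; first by lia.
      by lia.
    apply/forallP=> v; have -> : s - (f p1 + f p2) = k by lia.
    exact: hnot.
  apply/forallP=> i'; apply/forallP=> j'; apply/implyP=> /andP[h1 h2].
  apply: (pmin (i', j')); rewrite /P /= h1 /=; rewrite ps in h2; exact: h2.
case: (ltngtP p1 p2) => hlt.
- by exists (p1, p2); split=> //=; lia.
- exists (p2, p1); split=> //=; first by rewrite eb_sym.
  lia.
- by move/val_inj: hlt pne => ->; rewrite eqxx.
Qed.

Definition phi (p : 'I_n * 'I_n) : 'I_N.+1 := inord (s - (f p.1 + f p.2)).

Definition Kset : {set 'I_N.+1} := [set k : 'I_N.+1 | (0 < k) && [forall v, f v != k]].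

Lemma edges_eb p : (p \in edges (eb N s f)) = (p.1 < p.2) && eb N s f p.1 p.2.
Proof. by rewrite /edges inE. Qed.

Lemma phi_val p : p \in edges (eb N s f) -> (phi p : nat) = s - (f p.1 + f p.2).
Proof.
rewrite edges_eb => /andP[_ /and3P[_ /and3P[h1 h2 _] _]].
by rewrite /phi inordK //; lia.
Qed.

Lemma phi_inj : {in edges (eb N s f) &, injective phi}.
Proof.
move=> p q hp hq hpq.
have := phi_val hp; have := phi_val hq; rewrite hpq => e1 e2.
move: hp hq; rewrite !edges_eb => /andP[lp ep] /andP[lq eq].
have hsum : f p.1 + f p.2 = f q.1 + f q.2.
  move: ep eq => /and3P[_ /and3P[a1 _ _] _] /and3P[_ /and3P[a2 _ _] _]; lia.
case: (eb_uniq finj ep eq hsum) => [[a b]|[a b]].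
  by case: p q {lp lq ep eq hsum e1 e2 hpq} a b => [p1 p2] [q1 q2] /= -> ->.
exfalso; move: lp lq; rewrite a b; lia.
Qed.

Lemma phi_im : phi @: edges (eb N s f) = Kset.
Proof.
apply/setP=> k; apply/imsetP/idP.
- case=> p hp ->; rewrite inE; have hv := phi_val hp.
  move: hp; rewrite edges_eb => /andP[_ /and3P[_ /and3P[h1 h2 /forallP h3] _]].
  rewrite hv; apply/andP; split; first by lia.
  by apply/forallP.
- rewrite inE => /andP[k0 /forallP hk].
  have hk' : 0 < k <= N by rewrite k0 -ltnS ltn_ord.
  have [[p1 p2] [/= lp ep sp]] := eb_exists hk' (fun i => hk i).
  exists (p1, p2); first by rewrite edges_eb lp.
  apply: val_inj => /=; rewrite inordK /=; lia.
Qed.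

Lemma card_edges_eb : #|edges (eb N s f)| + n = N.
Proof.
rewrite -(card_in_imset phi_inj) phi_im.
pose A := [set k : 'I_N.+1 | 0 < k].
pose g := fun i : 'I_n => (inord (f i) : 'I_N.+1).
have ginj : injective g.
  move=> i j; rewrite /g => /(congr1 (@nat_of_ord _)).
  have hi := frange i; have hj := frange j.
  rewrite !inordK; [exact: finj | lia | lia].
pose B := g @: [set: 'I_n].
have BA : B \subset A.
  apply/subsetP=> x /imsetP[i _ ->]; have hi := frange i; rewrite inE /g inordK; lia.
have KAB : Kset = A :\: B.
  apply/setP=> k; rewrite !inE; apply/andP/andP.
  - case=> k0 /forallP hk; split=> //; apply/imsetP; case=> i _ hki.
    have hi := frange i; have := hk i; rewrite hki /g inordK ?eqxx //; lia.
  - case=> /negP hnB k0; split=> //; apply/forallP=> v; apply/eqP=> hv.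
    apply: hnB; apply/imsetP; exists v => //; apply: val_inj => /=; rewrite /g inordK hv //.
have cA : #|A| = N.
  have -> : A = ~: [set ord0].
    by apply/setP=> k; rewrite !inE lt0n; congr (~~ _); apply/eqP/eqP => [/eqP|->] //; move=> h; apply: val_inj; rewrite /= (eqP h).
  by rewrite cardsC1 card_ord.
have cB : #|B| = n by rewrite card_imset // cardsT card_ord.
rewrite KAB cardsD (setIidPr BA) cA cB.
have : #|B| <= #|A| by apply: subset_leq_card.
rewrite cA cB; lia.
Qed.

End Build2.

Section Build3.
Variables (n N s : nat) (f : 'I_n -> nat).
Hypothesis finj : injective f.
Hypothesis frange : forall i, 0 < f i <= N.
Hypothesis fcov : forall k, 0 < k <= N -> (forall i, f i != k) ->
  exists i j, i != j /\ f i + f j + k = s.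

Lemma build_magic : exists e : rel 'I_n,
  [/\ simple_graph e, edge_magic e & #|edges e| + n = N].
Proof.
have cE := card_edges_eb finj frange fcov.
exists (eb N s f); split => //.
  by split; [exact: eb_sym | exact: eb_irr].
exists f, (fun a b => s - (f a + f b)), s.
rewrite /edge_magic_labelling cE.
split; first exact: frange.
split.
  move=> [p1 p2]; rewrite edges_eb /= => /andP[_ /and3P[_ /and3P[h1 h2 _] _]]; lia.
split; first by move=> v w /finj.
split.
  move=> [p1 p2] [q1 q2]; rewrite !edges_eb /= => /andP[lp ep] /andP[lq eq] hl.
  have hsum : f p1 + f p2 = f q1 + f q2.
    move: ep eq => /and3P[_ /and3P[a1 _ _] _] /and3P[_ /and3P[a2 _ _] _]; lia.
  case: (eb_uniq finj ep eq hsum) => [[-> ->]|[a b]] //.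
  exfalso; move: lp lq; rewrite a b; lia.
split.
  move=> v [p1 p2]; rewrite edges_eb /= => /andP[_ /and3P[_ /and3P[_ _ /forallP h] _]].
  by move/eqP: (h v).
split.
  move=> k hk; case: (boolP [exists v, f v == k]) => [/existsP[v /eqP hv]|hn].
    by left; exists v.
  right; have hn' : forall i, f i != k.
    by move=> i; apply/negP => hi; move/negP: hn; apply; apply/existsP; exists i.
  have [[p1 p2] [/= lp ep sp]] := eb_exists fcov hk hn'.
  exists (p1, p2); first by rewrite edges_eb lp.
  rewrite /=; lia.
move=> [p1 p2]; rewrite edges_eb /= => /andP[_ /and3P[_ /and3P[h1 _ _] _]]; lia.
Qed.

End Build3.

Lemma euclid a d : 0 < d -> exists q r, a = q * d + r /\ r < d.
Proof. move=> hd; exists (a %/ d), (a %% d); split; [exact: divn_eq | exact: ltn_pmod]. Qed.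

Section Cons.
Variable w : nat.
Hypothesis w1 : 0 < w.

Definition p0 := 3*w*w + 4*w + 1.
Definition d2 := 6*w*w + 7*w + 1.
Definition d3 := 10*w*w + 11*w + 1.

Definition gnat (x : nat) : nat :=
  if x <= w then x
  else if x <= 4*w then (w+1)*(x - w)
  else if x <= 5*w+1 then p0 + w*(x - (4*w+1))
  else if x <= 6*w+2 then d2 + (x - (5*w+2))
  else d3 + (x - (6*w+3)).

Lemma gnat_step x : gnat x < gnat x.+1.
Proof.
rewrite /gnat /p0 /d2 /d3.
case: (leqP x w) => h1; case: (leqP x.+1 w) => h1'; try lia;
case: (leqP x (4*w)) => h2; case: (leqP x.+1 (4*w)) => h2'; try nia;
case: (leqP x (5*w+1)) => h3; case: (leqP x.+1 (5*w+1)) => h3'; try nia;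
case: (leqP x (6*w+2)) => h4; case: (leqP x.+1 (6*w+2)) => h4'; try nia.
Qed.

Lemma gnat_mono : {homo gnat : x y / x < y}.
Proof. apply: homo_ltn; [exact: ltn_trans | exact: gnat_step]. Qed.

Lemma gnat_inj x y : gnat x = gnat y -> x = y.
Proof.
move=> h; case: (ltngtP x y) => // hxy.
  by have := gnat_mono hxy; rewrite h ltnn.
by have := gnat_mono hxy; rewrite h ltnn.
Qed.

Lemma gD1 r : r <= w -> gnat r = r.
Proof. by move=> h; rewrite /gnat h. Qed.
Lemma gQ j : j < 3*w -> gnat (w+1+j) = (w+1)*(j+1).
Proof. move=> h; rewrite /gnat; case: ifP => h1; first lia. case: ifP => h2; [congr (_ * _); lia | lia]. Qed.
Lemma gP i : i <= w -> gnat (4*w+1+i) = p0 + w*i.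
Proof. move=> h; rewrite /gnat; (case: ifP => h1; first lia); (case: ifP => h2; first lia); case: ifP => h3; [congr (_ + _ * _); lia | lia]. Qed.
Lemma gD2 r : r <= w -> gnat (5*w+2+r) = d2 + r.
Proof. move=> h; rewrite /gnat; do 3 (case: ifP => ?; first lia); case: ifP => ?; [lia|lia]. Qed.
Lemma gD3 r : r <= w -> gnat (6*w+3+r) = d3 + r.
Proof. move=> h; rewrite /gnat; do 4 (case: ifP => ?; first lia); lia. Qed.

Definition cov t := exists x y, [/\ x != y, x < 7*w+4, y < 7*w+4 & gnat x + gnat y = t].

Lemma covA (b d : nat) : (forall r, r <= w -> gnat (b + r) = d + r) -> b + w < w + 1 \/ 4*w < b ->
  b + w < 7*w+4 ->
  forall t, d + (w+1) <= t < d + (w+1) + 3*w*(w+1) -> cov t.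
Proof.
move=> hg hb hb' t ht.
have [j [r [hu hr]]] := euclid (t - d - (w+1)) (isT : 0 < w.+1).
have hj : j < 3*w by nia.
exists (b + r), (w+1+j); split.
- apply/eqP; lia.
- lia.
- lia.
- rewrite hg; last by lia.
  rewrite gQ //. nia.
Qed.

Lemma covB (b d : nat) : (forall r, r <= w -> gnat (b + r) = d + r) -> b + w < 4*w+1 \/ 5*w+1 < b ->
  b + w < 7*w+4 ->
  forall t, d + p0 <= t < d + p0 + w*(w+1) -> cov t.
Proof.
move=> hg hb hb' t ht.
have [i [r [hu hr]]] := euclid (t - d - p0) w1.
have hi : i <= w by nia.
exists (b + r), (4*w+1+i); split.
- apply/eqP; lia.
- lia.
- lia.
- rewrite hg; last by lia.
  rewrite gP //. nia.
Qed.

Lemma covC t : (w+1) + p0 + w*w - 1 <= t < (w+1) + p0 + 3*w*w + 3*w -> cov t.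
Proof.
move=> ht; set u := t - ((w+1) + p0).
have [Qr [r [hu hr]]] := euclid u w1.
have hQ1 : w - 1 <= Qr by rewrite /u in hu; nia.
have hQ2 : Qr < 3*w + 3 by rewrite /u in hu; nia.
have [kk [ii [hv hii]]] := euclid (Qr - r) (isT : 0 < w.+1).
have hkk : kk <= 2 by nia.
exists (w+1+(r + w*kk)), (4*w+1+ii); split.
- apply/eqP; nia.
- nia.
- lia.
- rewrite gQ; last by nia.
  rewrite gP; last by lia.
  rewrite /u in hu. rewrite /p0 in ht hu *. nia.
Qed.

Lemma cov_all t : w + 1 <= t < 14*w*w + 16*w + 2 -> cov t.
Proof.
move=> ht.
have hD1 : forall r, r <= w -> gnat (0 + r) = 0 + r by move=> r h; rewrite !add0n gD1.
have hD2 : forall r, r <= w -> gnat (5*w+2 + r) = d2 + r by move=> r h; rewrite gD2.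
have hD3 : forall r, r <= w -> gnat (6*w+3 + r) = d3 + r by move=> r h; rewrite gD3.
case: (ltnP t (3*w*w+4*w+1)) => h1.
  move: (covA hD1) => H; apply: H; [lia | lia | nia].
case: (ltnP t (4*w*w+5*w+1)) => h2.
  move: (covB hD1) => H; apply: H; [lia | lia | (rewrite /p0; nia)].
case: (ltnP t (6*w*w+8*w+2)) => h3.
  apply: covC; rewrite /p0; nia.
case: (ltnP t (9*w*w+11*w+2)) => h4.
  move: (covA hD2) => H; apply: H; [lia | lia | (rewrite /d2; nia)].
case: (ltnP t (10*w*w+12*w+2)) => h5.
  move: (covB hD2) => H; apply: H; [lia | lia | (rewrite /d2 /p0; nia)].
case: (ltnP t (13*w*w+15*w+2)) => h6.
  move: (covA hD3) => H; apply: H; [lia | lia | (rewrite /d3; nia)].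
  move: (covB hD3) => H; apply: H; [lia | lia | (rewrite /d3 /p0; nia)].
Qed.

Lemma gnat_bound x : x < 7*w+4 -> gnat x <= 10*w*w + 12*w + 1.
Proof.
move=> hx; have := gnat_mono (isT : 0 < 1) ; move=> _.
have : gnat x <= gnat (7*w+3).
  case: (ltngtP x (7*w+3)) => h; [exact/ltnW/gnat_mono | lia | by rewrite h].
have -> : 7*w+3 = 6*w+3 + w by lia.
rewrite gD3 // /d3; lia.
Qed.

End Cons.

Lemma lower_nat (n : nat) : 40 <= n -> exists e : rel 'I_n,
  [/\ simple_graph e, edge_magic e & 2*n*n <= 7*#|edges e| + 35*n].
Proof.
move=> hn.
set w := (n - 4) %/ 7.
have hw : 7 * w <= n - 4 < 7 * w + 7.
  rewrite /w; have := divn_eq (n-4) 7; have := ltn_pmod (n-4) (isT : 0 < 7); lia.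
have w1 : 0 < w by lia.
set n0 := 7*w+4.
set N0 := 14*w*w + 15*w + 1.
set N := N0 + (n - n0).
set s := 14*w*w + 16*w + 4.
pose f := fun i : 'I_n => if (i < n0) then gnat w i + 1 else N0 + (i - n0) + 1.
have gb : forall x, x < n0 -> gnat w x <= 10*w*w + 12*w + 1 by move=> x hx; apply: gnat_bound.
have finj : injective f.
  move=> i j; rewrite /f; case: ifP => hi; case: ifP => hj.
  - by move=> h; apply: ord_inj; apply: (gnat_inj w1); lia.
  - move=> h; have := gb _ hi; lia.
  - move=> h; have := gb _ hj; lia.
  - move=> h; apply: ord_inj; lia.
have frange : forall i, 0 < f i <= N.
  move=> i; rewrite /f; case: ifP => hi.
    have := gb _ hi; rewrite /N /N0; nia.
  have := ltn_ord i; rewrite /N; lia.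
have fcov : forall k, 0 < k <= N -> (forall i, f i != k) ->
    exists i j, i != j /\ f i + f j + k = s.
  move=> k hk hnot.
  have hk0 : k <= N0.
    case: (leqP k N0) => // hkN.
    have hc : n0 + (k - N0 - 1) < n by rewrite /N in hk; lia.
    have := hnot (Ordinal hc); rewrite /f /= ifF; last by lia.
    by move/eqP => H; exfalso; apply: H; lia.
  have ht : w + 1 <= 14*w*w+16*w+2 - k < 14*w*w + 16*w + 2 by rewrite /N0 in hk0; nia.
  have [x [y [hxy hx hy hs]]] := cov_all w1 ht.
  have hx' : x < n by lia.
  have hy' : y < n by lia.
  exists (Ordinal hx'), (Ordinal hy'); split; first by [].
  rewrite /f /= ifT // ifT //; rewrite /s /N0 in hk0 *; lia.
have [e [he1 he2 he3]] := build_magic finj frange fcov.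
exists e; split => //.
rewrite /N /N0 /n0 in he3; nia.
Qed.

Open Scope R_scope.
Section RS.
Variables (I : finType) (P : pred I).
Lemma rsumN (F : I -> R) : \big[Rplus/0]_(i | P i) (- F i) = - \big[Rplus/0]_(i | P i) F i.
Proof. apply: (big_ind2 (fun x y => x = - y)) => //; [lra | move=> *; lra]. Qed.
Lemma rsumZ (c : R) (F : I -> R) : \big[Rplus/0]_(i | P i) (c * F i) = c * \big[Rplus/0]_(i | P i) F i.
Proof. apply: (big_ind2 (fun x y => x = c * y)) => //; [lra | move=> x1 x2 y1 y2 -> ->; ring]. Qed.
Lemma rsumD (F G : I -> R) : \big[Rplus/0]_(i | P i) (F i + G i) = \big[Rplus/0]_(i | P i) F i + \big[Rplus/0]_(i | P i) G i.
Proof. by rewrite big_split. Qed.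
Lemma rsumB (F G : I -> R) : \big[Rplus/0]_(i | P i) (F i - G i) = \big[Rplus/0]_(i | P i) F i - \big[Rplus/0]_(i | P i) G i.
Proof. by rewrite /Rminus rsumD rsumN. Qed.
Lemma rsum_le (F G : I -> R) : (forall i, P i -> F i <= G i) ->
  \big[Rplus/0]_(i | P i) F i <= \big[Rplus/0]_(i | P i) G i.
Proof. move=> h; apply: (big_ind2 (fun x y => x <= y)); [lra | move=> *; lra | exact: h]. Qed.
Lemma rsum_ext (F G : I -> R) : (forall i, P i -> F i = G i) ->
  \big[Rplus/0]_(i | P i) F i = \big[Rplus/0]_(i | P i) G i.
Proof. exact: eq_bigr. Qed.
End RS.

Section RSO.
Variable m : nat.
Lemma rsumN_o (F : 'I_m -> R) : \big[Rplus/0]_(i < m) (- F i) = - \big[Rplus/0]_(i < m) F i.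
Proof. exact: rsumN. Qed.
Lemma rsumZ_o (c : R) (F : 'I_m -> R) : \big[Rplus/0]_(i < m) (c * F i) = c * \big[Rplus/0]_(i < m) F i.
Proof. exact: rsumZ. Qed.
Lemma rsumD_o (F G : 'I_m -> R) : \big[Rplus/0]_(i < m) (F i + G i) = \big[Rplus/0]_(i < m) F i + \big[Rplus/0]_(i < m) G i.
Proof. exact: rsumD. Qed.
Lemma rsumB_o (F G : 'I_m -> R) : \big[Rplus/0]_(i < m) (F i - G i) = \big[Rplus/0]_(i < m) F i - \big[Rplus/0]_(i < m) G i.
Proof. exact: rsumB. Qed.
Lemma rsum_le_o (F G : 'I_m -> R) : (forall i, F i <= G i) ->
  \big[Rplus/0]_(i < m) F i <= \big[Rplus/0]_(i < m) G i.
Proof. move=> h; exact: rsum_le. Qed.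
Lemma rsum_ext_o (F G : 'I_m -> R) : (forall i, F i = G i) ->
  \big[Rplus/0]_(i < m) F i = \big[Rplus/0]_(i < m) G i.
Proof. move=> h; exact: eq_bigr. Qed.
End RSO.

Lemma rsum_const (m : nat) (c : R) : \big[Rplus/0]_(i < m) c = INR m * c.
Proof.
elim: m => [|m IH]; first by rewrite big_ord0 /= Rmult_0_l.
rewrite big_ord_recr IH S_INR /=; ring.
Qed.

Lemma rsum_CS (n : nat) (v : 'I_n -> R) :
  \big[Rplus/0]_(i < n) v i * \big[Rplus/0]_(i < n) v i <= INR n * \big[Rplus/0]_(i < n) (v i * v i).
Proof.
case: n v => [|n'] v.
  rewrite !big_ord0 /=; lra.
set n := n'.+1.
set V := \big[Rplus/0]_(i < n) v i.
have H : 0 <= \big[Rplus/0]_(i < n) ((INR n * v i - V) * (INR n * v i - V)).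
  have := rsum_le (P := xpredT) (F := fun _ : 'I_n => 0) (G := fun i => (INR n * v i - V) * (INR n * v i - V)).
  rewrite big1 //; apply => i _; apply: Rle_0_sqr.
have E : \big[Rplus/0]_(i < n) ((INR n * v i - V) * (INR n * v i - V)) =
   INR n * (INR n * \big[Rplus/0]_(i < n) (v i * v i) - V * V).
  rewrite (rsum_ext (G := fun i => (INR n * INR n) * (v i * v i) + ((-2 * INR n * V) * v i + V * V))); last by move=> i _; ring.
  rewrite rsumD rsumD rsumZ rsumZ rsum_const -/V.
  have key : forall W1 W2 : R, W1 = W2 -> INR n * INR n * W1 + (-2 * INR n * V * V + INR n * (V * V)) =
     INR n * (INR n * W2 - V * V) by move=> W1 W2 ->; ring.
  by apply: key.
rewrite E in H.
have hn : 0 < INR n by apply: lt_0_INR; rewrite /n; lia.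
have : 0 <= INR n * \big[Rplus/0]_(i < n) (v i * v i) - V * V.
  case: (Rle_lt_dec 0 (INR n * \big[Rplus/0]_(i < n) (v i * v i) - V * V)) => // hlt.
  nra.
lra.
Qed.

Lemma rsum_ind1 (I : finType) (P : pred I) (phi : I -> nat) c x0 :
  P x0 -> phi x0 = c -> (forall x, P x -> phi x = c -> x = x0) ->
  \big[Rplus/0]_(x | P x) (if phi x == c then 1 else 0) = 1.
Proof.
move=> Px0 hx0 hu; rewrite (bigD1 x0) //= hx0 eqxx big1; first lra.
move=> x /andP[Px hne]; case: eqP => // /(hu x Px) h; by rewrite h eqxx in hne.
Qed.

Lemma rsum_ind0 (I : finType) (P : pred I) (phi : I -> nat) c :
  (forall x, P x -> phi x <> c) ->
  \big[Rplus/0]_(x | P x) (if phi x == c then 1 else 0) = 0.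
Proof. by move=> h; rewrite big1 // => x Px; case: eqP => // /(h x Px). Qed.

Lemma rsum_pick (g : nat -> R) (N x : nat) : (0 < x <= N)%N ->
  \big[Rplus/0]_(k < N) (g k.+1 * (if x == k.+1 then 1 else 0)) = g x.
Proof.
move=> hx; have hx' : (x.-1 < N)%N by lia.
rewrite (bigD1 (Ordinal hx')) //= big1.
  have -> : x.-1.+1 = x by lia. rewrite eqxx; lra.
move=> k hk; case: eqP => h; last lra.
exfalso; move/eqP: hk; apply; apply: ord_inj => /=; lia.
Qed.

Section Label.
Variables (n : nat) (e : rel 'I_n) (lv : 'I_n -> nat) (le : 'I_n -> 'I_n -> nat) (s : nat).
Hypothesis Hl : edge_magic_labelling e lv le s.

Lemma label_sum (g : nat -> R) :
  \big[Rplus/0]_(p in edges e) g (le p.1 p.2) + \big[Rplus/0]_(i < n) g (lv i) =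
  \big[Rplus/0]_(k < (#|edges e| + n)%N) g k.+1.
Proof.
move: Hl; rewrite /edge_magic_labelling.
set N := (#|edges e| + n)%N.
case=> h1 [h2 [h3 [h4 [h5 [h6 h7]]]]].
have one : forall k : 'I_N,
  \big[Rplus/0]_(p in edges e) (if le p.1 p.2 == k.+1 then 1 else 0) +
  \big[Rplus/0]_(i < n) (if lv i == k.+1 then 1 else 0) = 1.
  move=> k; have hk : (1 <= k.+1 <= N)%N by rewrite ltn_ord andbT.
  case: (h6 _ hk) => [[v hv]|[p hp hpe]].
  - rewrite (rsum_ind0 (P := fun p => p \in edges e) (phi := fun p => le p.1 p.2)).
      rewrite (rsum_ind1 (P := fun _ => true) (x0 := v)) //; first lra.
      by move=> x _ hx; apply: h3; rewrite hx hv.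
    by move=> x hx hxe; apply: (h5 v x hx); rewrite hv hxe.
  - rewrite (rsum_ind1 (P := fun p => p \in edges e) (phi := fun p => le p.1 p.2) (x0 := p)) //.
      rewrite (rsum_ind0 (P := fun _ => true)); first lra.
      by move=> x _ hx; apply: (h5 x p hp); rewrite hx hpe.
    by move=> x hx hxe; apply: h4 => //; rewrite hxe hpe.
have E : \big[Rplus/0]_(k < N) g k.+1 = \big[Rplus/0]_(k < N) (g k.+1 *
   (\big[Rplus/0]_(p in edges e) (if le p.1 p.2 == k.+1 then 1 else 0) +
    \big[Rplus/0]_(i < n) (if lv i == k.+1 then 1 else 0))).
  by apply: eq_bigr => k _; rewrite one Rmult_1_r.
rewrite E.
under [RHS]eq_bigr do rewrite Rmult_plus_distr_l big_distrr big_distrr /=.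
rewrite big_split /=.
rewrite [X in _ = X + _](exchange_big_dep (fun p => p \in edges e)) //=.
rewrite [X in _ = _ + X](exchange_big_dep xpredT) //=.
congr (_ + _).
  apply: eq_big => [p|p hp] //.
  rewrite (eq_bigl (fun _ => true)); last by move=> i; rewrite hp.
  rewrite -(rsum_pick g (x := le p.1 p.2) (N := N)); last by apply: h2.
  by apply: eq_bigr => k _; rewrite eq_sym.
apply: eq_bigr => i _.
rewrite -(rsum_pick g (x := lv i) (N := N)); last by apply: h1.
by apply: eq_bigr => k _; rewrite eq_sym.
Qed.

End Label.

Lemma iter_addR (k : nat) : iter k (Rplus 1) 0 = INR k.
Proof. elim: k => [//|k IH]; rewrite iterS IH S_INR; lra. Qed.

Section Pairs.
Variables (n : nat) (e : rel 'I_n).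
Hypothesis esym : symmetric e.
Hypothesis eirr : irreflexive e.

Lemma pair_split (F : 'I_n -> 'I_n -> R) : (forall i j, F i j = F j i) ->
  \big[Rplus/0]_(i < n) \big[Rplus/0]_(j < n) F i j =
  2 * \big[Rplus/0]_(p in edges e) F p.1 p.2 +
  \big[Rplus/0]_(i < n) \big[Rplus/0]_(j < n) (if e i j then 0 else F i j).
Proof.
move=> Fsym.
have E1 : \big[Rplus/0]_(i < n) \big[Rplus/0]_(j < n) F i j =
   \big[Rplus/0]_(i < n) \big[Rplus/0]_(j < n) (if (i < j)%N && e i j then F i j else 0) +
   \big[Rplus/0]_(i < n) \big[Rplus/0]_(j < n) (if (j < i)%N && e i j then F i j else 0) +
   \big[Rplus/0]_(i < n) \big[Rplus/0]_(j < n) (if e i j then 0 else F i j).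
  rewrite -!big_split /=; apply: eq_bigr => i _; rewrite -!big_split /=; apply: eq_bigr => j _.
  case: (boolP (e i j)) => hij /=; last by rewrite !andbF; lra.
  case: (ltngtP i j) => h /=; try lra.
  by move/ord_inj: h hij => ->; rewrite eirr.
have E2 : \big[Rplus/0]_(i < n) \big[Rplus/0]_(j < n) (if (j < i)%N && e i j then F i j else 0) =
   \big[Rplus/0]_(i < n) \big[Rplus/0]_(j < n) (if (i < j)%N && e i j then F i j else 0).
  rewrite exchange_big /=; apply: eq_bigr => i _; apply: eq_bigr => j _.
  by rewrite esym Fsym.
have E3 : \big[Rplus/0]_(i < n) \big[Rplus/0]_(j < n) (if (i < j)%N && e i j then F i j else 0) =
   \big[Rplus/0]_(p in edges e) F p.1 p.2.
  rewrite pair_big /= [RHS]big_mkcond /=; apply: eq_bigr => [[i j]] _ /=.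
  by rewrite /edges inE.
rewrite E1 E2 E3; lra.
Qed.

Lemma count_pairs : \big[Rplus/0]_(i < n) \big[Rplus/0]_(j < n) (if e i j then 0 else 1) =
  INR n * INR n - 2 * INR #|edges e|.
Proof.
have H := pair_split (F := fun _ _ => 1) (fun _ _ => erefl).
have E1 : \big[Rplus/0]_(i < n) \big[Rplus/0]_(j < n) 1 = INR n * INR n.
  rewrite (eq_bigr (fun _ => INR n * 1)); last by move=> i _; rewrite rsum_const.
  by rewrite rsum_const Rmult_1_r.
have E2 : \big[Rplus/0]_(p in edges e) 1 = INR #|edges e| by rewrite big_const iter_addR.
rewrite E1 E2 in H; lra.
Qed.

End Pairs.

Lemma rsum_tele (F : nat -> R) (N : nat) :
  \big[Rplus/0]_(k < N) (F k - F k.+1) = F 0%N - F N.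
Proof.
elim: N => [|N IH]; first by rewrite big_ord0 /=; lra.
rewrite big_ord_recr IH /=; lra.
Qed.

Lemma tele_cos (t0 x : R) (N : nat) :
  2 * sin (x/2) * \big[Rplus/0]_(k < N) cos (t0 - INR k.+1 * x) =
  sin (t0 - x/2) - sin (t0 - INR N * x - x/2).
Proof.
rewrite big_distrr /=.
have -> : sin (t0 - x/2) = (fun k => sin (t0 - INR k * x - x/2)) 0%N by rewrite /= Rmult_0_l; f_equal; lra.
rewrite -(rsum_tele (fun k => sin (t0 - INR k * x - x/2))).
apply: eq_bigr => k _.
have -> : t0 - INR k * x - x/2 = (t0 - INR k.+1 * x) + x/2 by rewrite S_INR; lra.
set th := t0 - INR k.+1 * x; rewrite /= (sin_plus th) (sin_minus th); ring.
Qed.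

Lemma tele_sin (t0 x : R) (N : nat) :
  2 * sin (x/2) * \big[Rplus/0]_(k < N) sin (t0 - INR k.+1 * x) =
  cos (t0 - INR N * x - x/2) - cos (t0 - x/2).
Proof.
rewrite big_distrr /=.
have -> : cos (t0 - INR N * x - x/2) - cos (t0 - x/2) =
  (fun k => - cos (t0 - INR k * x - x/2)) 0%N - (fun k => - cos (t0 - INR k * x - x/2)) N.
  rewrite /= Rmult_0_l; have -> : t0 - 0 - x/2 = t0 - x/2 by lra. lra.
rewrite -(rsum_tele (fun k => - cos (t0 - INR k * x - x/2))).
apply: eq_bigr => k _.
have -> : t0 - INR k * x - x/2 = (t0 - INR k.+1 * x) + x/2 by rewrite S_INR; lra.
set th := t0 - INR k.+1 * x; rewrite /= (cos_plus th) (cos_minus th); ring.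
Qed.

Lemma final_arith (n m rho Y p : R) : 2000 <= n -> 488/1000 * (n*n) <= m ->
  0 < p <= 31416/10000 -> 0 <= Y ->
  4 * (m + n) / p - 2 * n - (n*n - 2*m) <= rho ->
  rho <= n / 2 * (n + Y) ->
  Y*Y*(Y*Y) <= 2 * ((2*n + (n*n - 2*m)) * (2*n + (n*n - 2*m))) ->
  0 <= 2*n + (n*n - 2*m) -> False.
Proof.
move=> hn hm hp hY h1 h2 h3 h4.
have hmn : 0 < m + n by nra.
have h5 : 4 * (m + n) / p >= 4 * (m + n) / (31416/10000).
  apply Rle_ge; unfold Rdiv; apply Rmult_le_compat_l; first lra.
  apply Rinv_le_contravar; lra.
have h6 : rho >= 5973/10000 * (n*n) - 2*n by nra.
have h7 : Y >= 1946/10000 * n - 4.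
  have : n / 2 * (n + Y) >= 5973/10000 * (n*n) - 2*n by lra.
  move=> H; nra.
set B := 2*n + (n*n - 2*m) in h3 h4.
have hB : B <= 24/1000 * (n*n) + 2*n by rewrite /B; nra.
set u := 1946/10000 * n - 4.
have hu : 0 <= u by rewrite /u; lra.
have hYu : u <= Y by rewrite /u; lra.
have hu2 : u*u >= 142/100 * (24/1000 * (n*n) + 2*n) by rewrite /u; nra.
have hY2 : Y*Y >= u*u by nra.
have hB2 : B*B <= (24/1000 * (n*n) + 2*n) * (24/1000 * (n*n) + 2*n) by nra.
nra.
Qed.

Lemma PI_ub : PI <= 31416/10000.
Proof.
destruct (PI_2_3_7_ineq 2) as [_ H].
unfold tg_alt, PI_2_3_7_tg, Ratan_seq in H. simpl in H.
lra.
Qed.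

Section Analytic.
Variables (n : nat) (e : rel 'I_n) (a : 'I_n -> R) (s : R) (N : nat).
Hypothesis esym : symmetric e.
Hypothesis eirr : irreflexive e.
Hypothesis HN : N = (#|edges e| + n)%N.
Hypothesis Hlab : forall h : R -> R, \big[Rplus/0]_(p in edges e) h (a p.1 + a p.2) =
   \big[Rplus/0]_(k < N) h (s - INR k.+1) - \big[Rplus/0]_(i < n) h (s - a i).

Let rr := INR n * INR n - 2 * INR #|edges e|.

Lemma Gbound (h : R -> R) (T : R) : (forall y, -1 <= h y <= 1) ->
  \big[Rplus/0]_(k < N) h (s - INR k.+1) = T ->
  2*T - 2*INR n - rr <= \big[Rplus/0]_(i < n) \big[Rplus/0]_(j < n) h (a i + a j) <= 2*T + 2*INR n + rr.
Proof.
move=> hb hT.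
rewrite (pair_split esym eirr (F := fun i j => h (a i + a j))); last by move=> i j; rewrite Rplus_comm.
rewrite Hlab hT.
have b1 : - INR n <= \big[Rplus/0]_(i < n) h (s - a i) <= INR n.
  split.
    have := rsum_le_o (F := fun _ : 'I_n => -1) (G := fun i => h (s - a i)).
    rewrite rsum_const => H; have := H (fun i => proj1 (hb _)); lra.
  have := rsum_le_o (G := fun _ : 'I_n => 1) (F := fun i => h (s - a i)).
  rewrite rsum_const => H; have := H (fun i => proj2 (hb _)); lra.
have cp := count_pairs esym eirr.
have b2 : - rr <= \big[Rplus/0]_(i < n) \big[Rplus/0]_(j < n) (if e i j then 0 else h (a i + a j)) <= rr.
  split.
    have H1 : \big[Rplus/0]_(i < n) \big[Rplus/0]_(j < n) (if e i j then 0 else -1) <=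
              \big[Rplus/0]_(i < n) \big[Rplus/0]_(j < n) (if e i j then 0 else h (a i + a j)).
      apply: rsum_le_o => i; apply: rsum_le_o => j; case: (e i j); [lra | exact: (proj1 (hb _))].
    have H2 : \big[Rplus/0]_(i < n) \big[Rplus/0]_(j < n) (if e i j then 0 else -1) =
              - \big[Rplus/0]_(i < n) \big[Rplus/0]_(j < n) (if e i j then 0 else 1).
      rewrite -rsumN_o; apply: rsum_ext_o => i; rewrite -rsumN_o; apply: rsum_ext_o => j.
      case: (e i j); lra.
    rewrite /rr; lra.
  have H1 : \big[Rplus/0]_(i < n) \big[Rplus/0]_(j < n) (if e i j then 0 else h (a i + a j)) <=
            \big[Rplus/0]_(i < n) \big[Rplus/0]_(j < n) (if e i j then 0 else 1).
    apply: rsum_le_o => i; apply: rsum_le_o => j; case: (e i j); [lra | exact: (proj2 (hb _))].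
  rewrite /rr; lra.
lra.
Qed.

Definition Cs x := \big[Rplus/0]_(i < n) cos (a i * x).
Definition Sn x := \big[Rplus/0]_(i < n) sin (a i * x).

Lemma pair_cos x : \big[Rplus/0]_(i < n) \big[Rplus/0]_(j < n) cos ((a i + a j) * x) =
  Cs x * Cs x - Sn x * Sn x.
Proof.
rewrite (rsum_ext_o (G := fun i => Cs x * cos (a i * x) - Sn x * sin (a i * x))).
  by rewrite rsumB_o !rsumZ_o.
move=> i; rewrite /Cs /Sn.
rewrite (rsum_ext_o (G := fun j => cos (a i * x) * cos (a j * x) - sin (a i * x) * sin (a j * x))).
  rewrite rsumB_o !rsumZ_o; ring.
by move=> j; rewrite Rmult_plus_distr_r cos_plus.
Qed.

Lemma pair_sin x : \big[Rplus/0]_(i < n) \big[Rplus/0]_(j < n) sin ((a i + a j) * x) =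
  2 * (Cs x * Sn x).
Proof.
rewrite (rsum_ext_o (G := fun i => Sn x * cos (a i * x) + Cs x * sin (a i * x))).
  rewrite rsumD_o !rsumZ_o. rewrite -/(Cs x) -/(Sn x). ring.
move=> i; rewrite /Cs /Sn.
rewrite (rsum_ext_o (G := fun j => cos (a i * x) * sin (a j * x) + sin (a i * x) * cos (a j * x))).
  rewrite rsumD_o !rsumZ_o; ring.
by move=> j; rewrite Rmult_plus_distr_r sin_plus; ring.
Qed.

Lemma pair_cos_shift x p : \big[Rplus/0]_(i < n) \big[Rplus/0]_(j < n) cos ((a i + a j) * x - p) =
  cos p * (Cs x * Cs x - Sn x * Sn x) + sin p * (2 * (Cs x * Sn x)).
Proof.
rewrite -pair_cos -pair_sin -!rsumZ_o -rsumD_o; apply: rsum_ext_o => i.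
rewrite -!rsumZ_o -rsumD_o; apply: rsum_ext_o => j.
rewrite cos_minus; ring.
Qed.

Lemma sin_shift2PI y : sin (y - 2 * PI) = sin y.
Proof. by rewrite sin_minus sin_2PI cos_2PI; ring. Qed.
Lemma cos_shift2PI y : cos (y - 2 * PI) = cos y.
Proof. by rewrite cos_minus sin_2PI cos_2PI; ring. Qed.

Lemma T2vals : (2 <= N)%N ->
  \big[Rplus/0]_(k < N) cos ((s - INR k.+1) * (2 * (PI / INR N))) = 0 /\
  \big[Rplus/0]_(k < N) sin ((s - INR k.+1) * (2 * (PI / INR N))) = 0.
Proof.
move=> hN.
have hNr : 2 <= INR N by rewrite -[2]/(INR 2); apply: le_INR; apply/leP.
set x := 2 * (PI / INR N).
have hx2 : x / 2 = PI / INR N by rewrite /x; field; lra.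
have hNx : INR N * x = 2 * PI by rewrite /x; field; lra.
have hs : 0 < sin (x / 2).
  rewrite hx2; apply: sin_gt_0.
    apply: Rdiv_lt_0_compat; [exact: PI_RGT_0 | lra].
  have := PI_RGT_0 => hpi.
  apply: (Rmult_lt_reg_r (INR N)); first lra.
  rewrite /Rdiv Rmult_assoc Rinv_l; nra.
have ec := tele_cos (s * x) x N.
have es := tele_sin (s * x) x N.
rewrite hNx in ec es.
have hh : s * x - 2 * PI - x / 2 = (s * x - x / 2) - 2 * PI by ring.
rewrite hh sin_shift2PI in ec; rewrite hh cos_shift2PI in es.
rewrite Rminus_diag in ec; rewrite Rminus_diag in es.
have Ec : \big[Rplus/0]_(k < N) cos ((s - INR k.+1) * x) = \big[Rplus/0]_(k < N) cos (s * x - INR k.+1 * x).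
  by apply: rsum_ext_o => k; rewrite Rmult_minus_distr_r.
have Es : \big[Rplus/0]_(k < N) sin ((s - INR k.+1) * x) = \big[Rplus/0]_(k < N) sin (s * x - INR k.+1 * x).
  by apply: rsum_ext_o => k; rewrite Rmult_minus_distr_r.
rewrite Ec Es; split; nra.
Qed.

Lemma T1val : (1 <= N)%N ->
  \big[Rplus/0]_(k < N) cos ((s - INR k.+1) * (PI / INR N) - (s - (INR N + 1) / 2) * (PI / INR N))
  = / sin (PI / INR N / 2).
Proof.
move=> hN.
have hNr : 1 <= INR N by rewrite -[1]/(INR 1); apply: le_INR; apply/leP.
set x := PI / INR N.
have hpi := PI_RGT_0.
have hx : 0 < x by apply: Rdiv_lt_0_compat; lra.
have hs : 0 < sin (x / 2).
  apply: sin_gt_0; first lra.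
  have : x <= PI.
    rewrite /x; apply: (Rmult_le_reg_r (INR N)); first lra.
    rewrite /Rdiv Rmult_assoc Rinv_l; nra.
  lra.
set t0 := (INR N + 1) / 2 * x.
have ec := tele_cos t0 x N.
have E : \big[Rplus/0]_(k < N) cos ((s - INR k.+1) * x - (s - (INR N + 1) / 2) * x) =
  \big[Rplus/0]_(k < N) cos (t0 - INR k.+1 * x).
  by apply: rsum_ext_o => k; rewrite /t0; f_equal; ring.
rewrite E.
have h1 : t0 - x / 2 = PI / 2 by rewrite /t0 /x; field; lra.
have h2 : t0 - INR N * x - x / 2 = - (PI / 2) by rewrite /t0 /x; field; lra.
rewrite h1 h2 sin_neg sin_PI2 in ec.
apply: (Rmult_eq_reg_l (2 * sin (x / 2))); last lra.
rewrite ec; field; lra.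
Qed.

Lemma CS_part x1 :
  let C1 := Cs x1 in let S1 := Sn x1 in let C2 := Cs (2 * x1) in let S2 := Sn (2 * x1) in
  (C1*C1 + S1*S1) * (C1*C1 + S1*S1) <=
  INR n * ((C1*C1 + S1*S1) / 2 * INR n + ((C1*C1 - S1*S1) / 2 * C2 + (C1*S1) * S2)).
Proof.
move=> C1 S1 C2 S2.
pose v := fun i : 'I_n => C1 * cos (a i * x1) + S1 * sin (a i * x1).
have Hs : \big[Rplus/0]_(i < n) v i = C1*C1 + S1*S1.
  rewrite /v rsumD_o !rsumZ_o; reflexivity.
have Hq : \big[Rplus/0]_(i < n) (v i * v i) =
    (C1*C1 + S1*S1) / 2 * INR n + ((C1*C1 - S1*S1) / 2 * C2 + (C1*S1) * S2).
  rewrite (rsum_ext_o (G := fun i => (C1*C1 + S1*S1) / 2 + ((C1*C1 - S1*S1) / 2 * cos (a i * (2 * x1)) + (C1*S1) * sin (a i * (2 * x1))))).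
    rewrite rsumD_o rsumD_o rsum_const !rsumZ_o.
    have key : forall W1 W2 W3 W4 : R, W1 = W2 -> W3 = W4 ->
       INR n * ((C1 * C1 + S1 * S1) / 2) + ((C1 * C1 - S1 * S1) / 2 * W1 + C1 * S1 * W3) =
       (C1 * C1 + S1 * S1) / 2 * INR n + ((C1 * C1 - S1 * S1) / 2 * W2 + C1 * S1 * W4).
      by move=> W1 W2 W3 W4 -> ->; ring.
    by apply: key.
  move=> i; rewrite /v.
  have -> : a i * (2 * x1) = 2 * (a i * x1) by ring.
  rewrite cos_2a sin_2a.
  have h := sin2_cos2 (a i * x1).
  rewrite /Rsqr in h; nra.
have := rsum_CS v; rewrite Hs Hq; lra.
Qed.

Theorem analytic_main : (2000 <= n)%N -> 488/1000 * (INR n * INR n) <= INR #|edges e| -> False.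
Proof.
move=> hn hm.
have hN2 : (2 <= N)%N by rewrite HN; lia.
have hnr : 2000 <= INR n.
  have h := le_INR 2000 n (ltac:(apply/leP; exact hn)).
  rewrite INR_IZR_INZ in h; change (Z.of_nat 2000) with 2000%Z in h; exact h.
have hNr : INR N = INR #|edges e| + INR n by rewrite HN -plusE plus_INR.
have hpi := PI_RGT_0.
have hpiu := PI_ub.
have hNpos : 0 < INR N by have := pos_INR #|edges e|; lra.
pose x1 := PI / INR N.
have hx1 : 0 < x1 by apply: Rdiv_lt_0_compat.
pose p := (s - (INR N + 1) / 2) * x1.
have [Tc Ts] := T2vals hN2.
have T1 := T1val (ltnW hN2).
have hb_cos : forall z, forall y, -1 <= cos (y * z) <= 1 by move=> z y; apply: COS_bound.
have hb_sin : forall z, forall y, -1 <= sin (y * z) <= 1 by move=> z y; apply: SIN_bound.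
have G1 := Gbound (h := fun y => cos (y * (2 * (PI / INR N)))) (hb_cos _) Tc.
have G2 := Gbound (h := fun y => sin (y * (2 * (PI / INR N)))) (hb_sin _) Ts.
have G3 := Gbound (h := fun y => cos (y * (PI / INR N) - (s - (INR N + 1) / 2) * (PI / INR N)))
   (fun y => COS_bound _) T1.
rewrite /= pair_cos in G1.
rewrite /= pair_sin in G2.
rewrite /= pair_cos_shift in G3.
rewrite -/x1 in G1 G2 G3 T1.
rewrite -/p in G3.
set C1 := Cs x1 in G3 *; set S1 := Sn x1 in G3 *.
set C2 := Cs (2 * x1) in G1 G2 *; set S2 := Sn (2 * x1) in G1 G2 *.
rewrite /rr in G1 G2 G3.
set m := INR #|edges e| in hm hNr G1 G2 G3 *.
have hCS := CS_part x1; cbv zeta in hCS; rewrite -/C1 -/S1 -/C2 -/S2 in hCS.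
set rho := C1 * C1 + S1 * S1 in hCS *.
have hrho : 0 <= rho by rewrite /rho; nra.
have hsin : 0 < sin (x1 / 2) /\ sin (x1 / 2) <= x1 / 2.
  split.
    apply: sin_gt_0; first lra.
    have : x1 <= PI.
      rewrite /x1; apply: (Rmult_le_reg_r (INR N)); first lra.
      rewrite /Rdiv Rmult_assoc Rinv_l; nra.
    lra.
  apply: Rlt_le; apply: sin_lt_x; lra.
have hT : / sin (x1 / 2) >= 2 * INR N / PI.
  case: hsin => h1 h2.
  have -> : 2 * INR N / PI = / (x1 / 2) by rewrite /x1; field; lra.
  apply: Rle_ge; apply: Rinv_le_contravar; lra.
have hproj : cos p * (C1 * C1 - S1 * S1) + sin p * (2 * (C1 * S1)) <= rho.
  have hcs := sin2_cos2 p; rewrite /Rsqr in hcs.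
  have hsq : (cos p * (C1 * C1 - S1 * S1) + sin p * (2 * (C1 * S1))) *
             (cos p * (C1 * C1 - S1 * S1) + sin p * (2 * (C1 * S1))) <= rho * rho.
    have : rho * rho = (C1 * C1 - S1 * S1) * (C1 * C1 - S1 * S1) + (2 * (C1 * S1)) * (2 * (C1 * S1)) by rewrite /rho; ring.
    move=> ->.
    have hc1 : cos p * cos p + sin p * sin p = 1 by have := sin2_cos2 p; rewrite /Rsqr; lra.
    set u := C1 * C1 - S1 * S1; set w := 2 * (C1 * S1).
    have -> : (cos p * u + sin p * w) * (cos p * u + sin p * w) =
      (cos p * cos p + sin p * sin p) * (u * u + w * w) - (sin p * u - cos p * w) * (sin p * u - cos p * w) by ring.
    rewrite hc1; have := Rle_0_sqr (sin p * u - cos p * w); rewrite /Rsqr; lra.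
  nra.
have hlow : 4 * (m + INR n) / PI - 2 * INR n - (INR n * INR n - 2 * m) <= rho.
  have : 4 * (m + INR n) / PI = 2 * (2 * INR N / PI) by rewrite hNr; field; lra.
  lra.
set Y := sqrt (C2 * C2 + S2 * S2).
have hY0 : 0 <= Y by apply: sqrt_pos.
have hYY : Y * Y = C2 * C2 + S2 * S2 by rewrite /Y sqrt_sqrt //; nra.
have h2d : (C1 * C1 - S1 * S1) / 2 * C2 + C1 * S1 * S2 <= rho * Y / 2.
  have hsq : ((C1 * C1 - S1 * S1) * C2 + 2 * (C1 * S1) * S2) * ((C1 * C1 - S1 * S1) * C2 + 2 * (C1 * S1) * S2)
      <= (rho * Y) * (rho * Y).
    have -> : (rho * Y) * (rho * Y) = ((C1 * C1 - S1 * S1) * (C1 * C1 - S1 * S1) + (2 * (C1 * S1)) * (2 * (C1 * S1))) * (Y * Y)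
      by rewrite /rho; ring.
    rewrite hYY.
    set u := C1 * C1 - S1 * S1; set w := 2 * (C1 * S1).
    have -> : (u * u + w * w) * (C2 * C2 + S2 * S2) =
       (u * C2 + w * S2) * (u * C2 + w * S2) + (u * S2 - w * C2) * (u * S2 - w * C2) by ring.
    have := Rle_0_sqr (u * S2 - w * C2); rewrite /Rsqr; lra.
  have : 0 <= rho * Y by nra.
  nra.
have hup : rho <= INR n / 2 * (INR n + Y).
  case: (Rle_lt_dec rho 0) => hr.
    have : 0 <= INR n / 2 * (INR n + Y) by nra.
    lra.
  have h3 : INR n * ((C1*C1 - S1*S1)/2 * C2 + C1*S1*S2) <= INR n * (rho * Y / 2) by apply: Rmult_le_compat_l; lra.
  have H : rho * rho <= rho * (INR n / 2 * (INR n + Y)) by nra.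
  exact: (Rmult_le_reg_l rho _ _ hr H).
have hY4 : Y * Y * (Y * Y) <= 2 * ((2 * INR n + (INR n * INR n - 2 * m)) * (2 * INR n + (INR n * INR n - 2 * m))).
  rewrite hYY.
  have -> : (C2 * C2 + S2 * S2) * (C2 * C2 + S2 * S2) =
     (C2 * C2 - S2 * S2) * (C2 * C2 - S2 * S2) + (2 * (C2 * S2)) * (2 * (C2 * S2)) by ring.
  nra.
have hpos : 0 <= 2 * INR n + (INR n * INR n - 2 * m) by lra.
apply: (final_arith (n := INR n) (m := m) (rho := rho) (Y := Y) (p := PI)) => //.
Qed.

End Analytic.

Lemma upper_nat (n : nat) (e : rel 'I_n) : (2000 <= n)%N -> simple_graph e -> edge_magic e ->
  INR #|edges e| < 488/1000 * (INR n * INR n).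
Proof.
move=> hn [esym eirr] [lv [le [s Hl]]].
apply: Rnot_le_lt => hm.
have h7 : forall p, p \in edges e -> (lv p.1 + lv p.2 + le p.1 p.2)%N = s.
  by case: Hl => _ [_ [_ [_ [_ [_ h]]]]].
apply: (analytic_main (a := fun i => INR (lv i)) (s := INR s) (N := (#|edges e| + n)%N) esym eirr erefl _ hn hm).
move=> h.
have L := label_sum Hl (fun k => h (INR s - INR k)).
have E : \big[Rplus/0]_(p in edges e) h (INR (lv p.1) + INR (lv p.2)) =
         \big[Rplus/0]_(p in edges e) h (INR s - INR (le p.1 p.2)).
  apply: eq_bigr => p hp; f_equal.
  rewrite -(h7 p hp) !plus_INR; ring.
rewrite E; simpl in L |- *; lra.
Qed.

Lemma const_ge : 488/1000 <= 1 / 2 - 2 / (2 + (1 + 2 * sqrt 2) * PI) ^ 2.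
Proof.
have hs : 14/10 <= sqrt 2.
  have h0 := sqrt_pos 2; have h2 := sqrt_sqrt 2 (ltac:(lra)).
  nra.
have hpi : 3 <= PI by have := PI2_3_2; lra.
set K := 2 + (1 + 2 * sqrt 2) * PI.
have hK : 134/10 <= K by rewrite /K; nra.
have hK2 : 0 < K ^ 2 by nra.
have : 2 / K ^ 2 <= 12/1000.
  apply: (Rmult_le_reg_r (K ^ 2)) => //.
  rewrite /Rdiv Rmult_assoc Rinv_l; nra.
lra.
Qed.

Theorem theorem1 (M : nat -> nat) (HM : forall n, is_max_edge_magic n (M n)) :
  (exists C : R, exists N0 : nat, forall n : nat, (N0 <= n)%coq_nat ->
      2 / 7 * INR n ^ 2 - C * INR n <= INR (M n)) /\
  (forall eps : R, 0 < eps -> exists N0 : nat, forall n : nat, (N0 <= n)%coq_nat ->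
      INR (M n) <=
      (1 / 2 - 2 / (2 + (1 + 2 * sqrt 2) * PI) ^ 2 + eps) * INR n ^ 2).
Proof.
split.
- exists 5, 40%N => n hn.
  have hn' : (40 <= n)%N by apply/leP.
  have [e [he1 he2 he3]] := lower_nat hn'.
  have hle : (#|edges e| <= M n)%N := (HM n).2 e he1 he2.
  have hnat : (2 * n * n <= 7 * M n + 35 * n)%N by lia.
  have hr := le_INR _ _ (elimT leP hnat).
  rewrite -!plusE -!multE !plus_INR !mult_INR in hr.
  have c2 : INR 2 = 2 by simpl; lra.
  rewrite c2 /= in hr.
  have -> : INR n ^ 2 = INR n * INR n by ring.
  lra.
- move=> eps heps; exists 2000%N => n hn.
  have [[e [he1 he2 he3]] _] := HM n.
  have hn' : (2000 <= n)%N by apply/leP.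
  have := upper_nat hn' he1 he2; rewrite he3 => hlt.
  have hc := const_ge.
  have -> : INR n ^ 2 = INR n * INR n by ring.
  have hsq : 0 <= INR n * INR n by nra.
  nra.
Qed.
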